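(* Let $\tau_i$ be an HC task that switches to HC mode at time $t_i\le t$, and suppose $D_i-D_i^L\le t-t_i<D_i$. Then $\tau_i$ generates maximal demand during $[0,t)$ with a release sequence in which successive jobs are released as soon as possible (every $T_i$ time units) and the first job is released either at time $0$ or at time $t-D_i-\lfloor (t-D_i)/T_i\rfloor\cdot T_i$.
   Context: A mixed-criticality sporadic task is $\tau_i=(T_i,L_i,\{C_i^L,C_i^H\},D_i)$: jobs are released with minimum separation $T_i$, $L_i\in\{LC,HC\}$, $D_i\le T_i$ is the relative deadline, and $C_i^L<C_i^H$ for HC tasks. Each task has a tightened deadline $D_i^L\le D_i$. An HC task is in LC mode until the instant $t_i$ at which some job requests to execute for more than $C_i^L$; from then on it is in HC mode. While in LC mode, a job released at $r$ must receive $C_i^L$ time units by $r+D_i^L$; once the task is in HC mode, a job may require up to $C_i^H$ units in total, to be received by its actual deadline $r+D_i$. The demand of a task during $[0,t)$ is the amount of execution that must be completed within $[0,t)$ in order to meet all of its deadlines that fall in $[0,t)$; execution with deadline after $t$ contributes no demand. ''Maximal demand'' is over all legal release sequences (minimum separation $T_i$) and all legal execution behaviours. *)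

(* Defs.v *)
(* time and execution amounts live in an archimedean
   real field R (a realType), so that floor is available. *)
From mathcomp Require Import all_boot all_order all_algebra.
From mathcomp Require Import reals.
Set Implicit Arguments. Unset Strict Implicit. Unset Printing Implicit Defensive.
Import Order.TTheory GRing.Theory Num.Theory.
Local Open Scope ring_scope.

(* A mixed-criticality sporadic task (T, L, {C^L, C^H}, D) with a tightened
   deadline D^L.  The criticality level is recorded as a boolean [hc]. *)
Record mctask (R : realType) := MCTask {
  period : R;
  hc : bool;
  cL : R;
  cH : R;
  dl : R;
  dlL : R          (* D_i^L : tightened (LC-mode) deadline *)
}.

Definition wf_hc_task (R : realType) (tk : mctask R) : Prop :=
  hc tk /\ 0 < period tk /\ 0 <= cL tk /\ cL tk < cH tk /\
  0 < dlL tk /\ dlL tk <= dl tk /\ dl tk <= period tk.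

(* A (finite prefix of a) legal release sequence: release times are >= 0 and
   successive releases are separated by at least T. *)
Definition legal_releases (R : realType) (tk : mctask R) (s : seq R) : bool :=
  all (fun r => 0 <= r) s && sorted (fun a b => a + period tk <= b) s.

(* Maximal (over legal execution behaviours) demand, within [0,t), of a
   single job released at r, for a task switching to HC mode at time ti:
   - if its LC deadline r + D^L is not after ti, the job lives entirely in
     LC mode and needs C^L by r + D^L;
   - otherwise the task is in HC mode before the job's LC deadline, and the
     job may need up to C^H by its actual deadline r + D.
   Only deadlines d with d <= t (i.e. execution within [0,t)) count. *)
Definition job_demand (R : realType) (tk : mctask R) (ti t r : R) : R :=
  if r + dlL tk <= ti then (if r + dlL tk <= t then cL tk else 0)
  else (if r + dl tk <= t then cH tk else 0).

Definition demand (R : realType) (tk : mctask R) (ti t : R) (s : seq R) : R :=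
  \sum_(r <- s) job_demand tk ti t r.

(* Release sequence where jobs are released as soon as possible (every T),
   the first one at r0; n jobs (later jobs are irrelevant for [0,t)). *)
Definition asap_releases (R : realType) (tk : mctask R) (r0 : R) (n : nat)
  : seq R := [seq r0 + k%:R * period tk | k <- iota 0 n].

(* Main.v *)
Require Import Defs.
From mathcomp Require Import all_boot all_order all_algebra.
From mathcomp Require Import reals.
From mathcomp Require Import lra.
Import Order.TTheory GRing.Theory Num.Theory.
Local Open Scope ring_scope.

Lemma gap_trans (R : realType) (T : R) : 0 < T ->
  transitive (fun a b : R => a + T <= b).
Proof. move=> hT b a c h1 h2 /=; lra. Qed.
Arguments gap_trans {R T}.

Lemma countL2 (R : realType) (T x : R) (s : seq R) (m : R) : 0 < T ->
  sorted (fun a b => a + T <= b) s -> all (fun y => m <= y) s ->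
  count (fun r => r <= x) s != 0%N ->
  (count (fun r => r <= x) s)%:R * T <= x - m + T.
Proof.
move=> hT; elim: s m => [|r s IH] m //= hs /andP[hm hall].
have hs' : sorted (fun a b => a + T <= b) s := path_sorted hs.
have hall' := order_path_min (gap_trans hT) hs.
have hallr : all (fun y => r + T <= y) s := hall'.
case: (boolP (r <= x)) => hrx /=.
- case: (count (fun r => r <= x) s =P 0%N) => [->|/eqP hpos] _.
  + rewrite add1n mul1r; lra.
  + have := IH (r + T) hs' hallr hpos.
    rewrite add1n -addn1 natrD mulrDl mul1r; lra.
- rewrite add0n => hpos.
  have := IH (r + T) hs' hallr hpos.
  have : 1 <= (count (fun r => r <= x) s)%:R :> R by rewrite ler1n lt0n.
  rewrite -ltNge in hrx.
  move=> h1 h2; have : T <= (count (fun r => r <= x) s)%:R * T.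
    by rewrite -{1}(mul1r T) ler_wpM2r // ltW.
  lra.
Qed.

Lemma countL3 (R : realType) (T c x : R) (s : seq R) : 0 < T -> x - c < T ->
  sorted (fun a b => a + T <= b) s ->
  leq (count (fun r => (c < r) && (r <= x)) s) 1.
Proof.
move=> hT hxc; elim: s => [|r s IH] //= hs.
have hs' : sorted (fun a b => a + T <= b) s := path_sorted hs.
have hall := order_path_min (gap_trans hT) hs.
case: (boolP ((c < r) && (r <= x))) => /= hr; last by rewrite add0n IH.
move/andP: hr => [h1 h2].
suff -> : count (fun r => (c < r) && (r <= x)) s = 0%N by [].
apply/eqP; rewrite -leqn0 leqNgt -has_count; apply/hasPn => y /(allP hall) /= hy.
apply/negP => /andP[_ hyx]; lra.
Qed.

Lemma count_split (R : realType) (a b : R) (s : seq R) : a <= b ->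
  count (fun r => r <= b) s =
  addn (count (fun r => r <= a) s) (count (fun r => (a < r) && (r <= b)) s).
Proof.
move=> hab; elim: s => [|r s IH] //=; rewrite IH.
case: (lerP r a) => hra /=.
- have -> : r <= b by lra.
  by rewrite add1n add0n addSn.
- rewrite add0n; case: (r <= b) => /=; by rewrite ?addnS ?add1n ?add0n.
Qed.

Lemma demand_count (R : realType) (tk : mctask R) (ti t : R) (s : seq R) :
  ti <= t ->
  demand tk ti t s =
  (count (fun r => r <= ti - dlL tk) s)%:R * cL tk +
  (count (fun r => (ti - dlL tk < r) && (r <= t - dl tk)) s)%:R * cH tk.
Proof.
move=> hti; rewrite /demand; elim: s => [|r s IH]; first by rewrite big_nil !mul0r addr0.
rewrite big_cons IH /= /job_demand.
have E1 : (r + dlL tk <= ti) = (r <= ti - dlL tk) by rewrite lerBrDr.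
have E2 : (r + dl tk <= t) = (r <= t - dl tk) by rewrite lerBrDr.
rewrite E1 E2.
case: (lerP r (ti - dlL tk)) => h /=.
- have -> : r + dlL tk <= t by lra.
  rewrite !natrD !mulrDl; lra.
- case: (r <= t - dl tk); rewrite /= !natrD !mulrDl; lra.
Qed.

Lemma asapS (R : realType) (tk : mctask R) (r0 : R) (n : nat) :
  asap_releases tk r0 n.+1 = r0 :: asap_releases tk (r0 + period tk) n.
Proof.
rewrite /asap_releases /= mul0r addr0; congr (_ :: _).
rewrite -(addn0 1%N) iotaDl -map_comp; apply: eq_map => k /=.
rewrite natrD mulrDl mul1r addrA; congr (_ + _ + _); lra.
Qed.

Lemma asap_legal (R : realType) (tk : mctask R) (r0 : R) (n : nat) :
  0 < period tk -> 0 <= r0 -> legal_releases tk (asap_releases tk r0 n).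
Proof.
move=> hT; rewrite /legal_releases; elim: n r0 => [|n IH] r0 h0 //.
rewrite asapS /=; have hT0 : 0 <= r0 + period tk by lra.
move/andP: (IH _ hT0) => [-> hs]; rewrite h0 /=.
case: n {IH} hs => [|n] //; rewrite asapS /= lexx //.
Qed.

Lemma asap_mem (R : realType) (tk : mctask R) (r0 : R) (n : nat) r :
  r \in asap_releases tk r0 n -> exists2 k : nat, (k < n)%N & r = r0 + k%:R * period tk.
Proof. by case/mapP => k; rewrite mem_iota add0n => /andP[_ hk] ->; exists k. Qed.

Lemma count_all_size (T : Type) (P : pred T) (s : seq T) :
  all P s -> count P s = size s.
Proof. by move=> h; apply/eqP; rewrite -all_count. Qed.

Lemma demand_ge0 (R : realType) (tk : mctask R) (ti t : R) s :
  wf_hc_task tk -> ti <= t -> 0 <= demand tk ti t s.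
Proof.
move=> [_ [_ [hcL [hcH _]]]] hti; rewrite demand_count //.
have h1 : 0 <= (count (fun r => r <= ti - dlL tk) s)%:R :> R by [].
have h2 : 0 <= (count (fun r => (ti - dlL tk < r) && (r <= t - dl tk)) s)%:R :> R by [].
have : 0 <= cH tk by lra.
move=> h3; apply: addr_ge0; apply: mulr_ge0 => //.
Qed.
Arguments countL2 {R T} x {s m}.
Arguments countL3 {R T c x s}.
Arguments count_split {R a b} s.
Arguments asap_mem {R tk r0 n r}.

Theorem lemma4 (R : realType) (tk : mctask R) (ti t : R) :
  wf_hc_task tk ->
  0 <= ti -> ti <= t ->
  dl tk - dlL tk <= t - ti -> t - ti < dl tk ->
  exists (r0 : R) (n : nat),
    (r0 = 0 \/
     r0 = t - dl tk - (Num.floor ((t - dl tk) / period tk))%:~R * period tk) /\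
    legal_releases tk (asap_releases tk r0 n) /\
    forall s : seq R, legal_releases tk s ->
      demand tk ti t s <= demand tk ti t (asap_releases tk r0 n).
Proof.
move=> hwf h0ti htit hlo hhi.
have [hhc [hT [hcL [hcLH [hdlL [hdlLD hDT]]]]]] := hwf.
set K0 := Num.floor ((ti - dlL tk) / (period tk)).
set K1 := Num.floor ((t - dl tk) / (period tk)).
set n0 := (`|K0|.+1)%N.
set n1 := (`|K1|.+1)%N.
set r1 := t - dl tk - K1%:~R * (period tk).
set D0 := demand tk ti t (asap_releases tk 0 n0).
set D1 := demand tk ti t (asap_releases tk r1 n1).
have hr1 : 0 <= r1.
  rewrite /r1; have := floor_le ((t - dl tk) / (period tk)).
  rewrite -/K1 ler_pdivlMr // => h; lra.
have key : forall s, legal_releases tk s ->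
    demand tk ti t s <= D0 \/ demand tk ti t s <= D1.
  move=> s /andP[hall hsort].
  have hab : ti - dlL tk <= t - dl tk by lra.
  have hba : t - dl tk - (ti - dlL tk) < (period tk) by lra.
  rewrite demand_count //.
  have hH := countL3 hT hba hsort.
  have hsplit := count_split s hab.
  move: hH; rewrite leq_eqVlt ltnS leqn0 => /orP[/eqP hH1|/eqP hH0].
  - right.
    rewrite hH1 mul1r.
    set N1 := count (fun r => r <= ti - dlL tk) s in hsplit *.
    rewrite hH1 addn1 in hsplit.
    have hall0 : all (fun y => 0 <= y) s by [].
    have := countL2 (t - dl tk) hT hsort hall0.
    rewrite hsplit => /(_ isT); rewrite subr0 -addn1 natrD mulrDl mul1r => hN.
    have hN0 : 0 <= N1%:R * (period tk) by apply: mulr_ge0 => //; lra.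
    have hb0 : 0 <= t - dl tk by lra.
    have hhas : has (fun r => (ti - dlL tk < r) && (r <= t - dl tk)) s.
      by rewrite has_count hH1.
    case/hasP: hhas => r hr /andP[har hrb].
    have hK1 : (0 <= K1)%R by rewrite floor_ge0 divr_ge0 // ltW.
    have hNK : (N1%:Z <= K1)%R.
      rewrite floor_ge_int ler_pdivlMr //.
      rewrite -pmulrn; lra.
    have hNK' : (N1 <= `|K1|)%N by rewrite -lez_nat abszE ger0_norm.
    have hK1R : (`|K1|%:R : R) = K1%:~R by rewrite natr_absz ger0_norm.
    rewrite /D1.
    have -> : asap_releases tk r1 n1 = asap_releases tk r1 `|K1| ++ [:: t - dl tk].
      rewrite /asap_releases /n1 -addn1 iotaD map_cat /= add0n hK1R /r1.
      congr (_ ++ [:: _]); rewrite /(period tk); lra.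
    rewrite demand_count // !count_cat /=.
    have -> : (t - dl tk <= ti - dlL tk) = false.
      apply/negbTE; rewrite -ltNge; lra.
    rewrite lexx andbT.
    have -> : (ti - dlL tk < t - dl tk) = true by apply/idP; lra.
    have -> : count (fun r => r <= ti - dlL tk) (asap_releases tk r1 `|K1|) = absz K1.
      rewrite count_all_size; last first.
        apply/allP => y /asap_mem [k hk ->].
        have : (k.+1%:R : R) <= K1%:~R by rewrite -hK1R ler_nat.
        rewrite /r1 -natr1 => hk'.
        have : (k%:R + 1) * (period tk) <= K1%:~R * (period tk) by rewrite ler_wpM2r // ltW.
        rewrite mulrDl mul1r => hk''; lra.
      by rewrite size_map size_iota.
    rewrite addn1 -natr1 mulrDl mul1r /= addn0.
    apply: lerD; first by rewrite addn0 ler_wpM2r // ler_nat.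
    rewrite lerDr; apply: mulr_ge0 => //; lra.
  - left.
    rewrite hH0 mul0r addr0.
    set N1 := count (fun r => r <= ti - dlL tk) s in hsplit *.
    case: (N1 =P 0%N) => [->|/eqP hN1].
      by rewrite mul0r; apply: demand_ge0.
    have hall0 : all (fun y => 0 <= y) s by [].
    have := countL2 (ti - dlL tk) hT hsort hall0 hN1.
    rewrite subr0 => hN.
    have hN1' : N1 = (N1.-1).+1 by rewrite prednK // lt0n.
    have hN2 : N1%:R * period tk <= ti - dlL tk + period tk := hN.
    have {hN hN2} hN : N1.-1%:R * period tk + period tk <= ti - dlL tk + period tk.
      by move: hN2; rewrite {1}hN1' -natr1 mulrDl mul1r.
    have hN0 : 0 <= N1.-1%:R * (period tk) by apply: mulr_ge0 => //; lra.
    have ha0 : 0 <= ti - dlL tk by lra.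
    have hK0 : (0 <= K0)%R by rewrite floor_ge0 divr_ge0 // ltW.
    have hNK : ((N1.-1)%:Z <= K0)%R.
      rewrite floor_ge_int ler_pdivlMr //.
      rewrite -pmulrn; lra.
    have hNK' : (N1 <= n0)%N by rewrite /n0 {1}hN1' ltnS -lez_nat abszE ger0_norm.
    have hK0R : (`|K0|%:R : R) = K0%:~R by rewrite natr_absz ger0_norm.
    rewrite /D0 demand_count //.
    have -> : count (fun r => r <= ti - dlL tk) (asap_releases tk 0 n0) = n0.
      rewrite count_all_size; last first.
        apply/allP => y /asap_mem [k hk ->].
        have : (k%:R : R) <= K0%:~R by rewrite -hK0R ler_nat -ltnS.
        move=> hk'.
        have : k%:R * (period tk) <= K0%:~R * (period tk) by rewrite ler_wpM2r // ltW.
        have := floor_le ((ti - dlL tk) / (period tk)).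
        rewrite -/K0 ler_pdivlMr // => h1 h2; lra.
      by rewrite size_map size_iota.
    have : N1%:R * cL tk <= n0%:R * cL tk by rewrite ler_wpM2r // ler_nat.
    have : 0 <= (count (fun r => (ti - dlL tk < r) && (r <= t - dl tk))
                   (asap_releases tk 0 n0))%:R * cH tk.
      by apply: mulr_ge0 => //; lra.
    lra.
case: (lerP D1 D0) => hD.
- exists 0, n0; split; first by left.
  split; first exact: asap_legal.
  by move=> s /key [|]; rewrite -/D0 => h; lra.
- exists r1, n1; split; first by right.
  split; first exact: asap_legal.
  by move=> s /key [|]; rewrite -/D1 => h; lra.
Qed.
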